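(* Fix an integer $\ell>6$ and a real $t>0$. For integers $k>2$ let $T=\lfloor tk\rfloor$ and let $H_{\ell,k,t}$ be the graph constructed as follows: for each $1\le r\le k$ take disjoint paths $x_{0,r}x_{1,r}\cdots x_{\ell+1,r}$ and $y_{0,r}y_{1,r}y_{2,r}y_{3,r}y_{4,r}y_{5,r}$; identify all $x_{0,r},y_{0,r}$ into a single vertex $u$; identify all $x_{\ell+1,r},y_{5,r}$ into a single vertex $v$; identify $y_{2,1},\dots,y_{2,k}$ into a single vertex $y_{2,*}$ and $y_{3,1},\dots,y_{3,k}$ into a single vertex $y_{3,*}$ (the $k$ edges $y_{2,r}y_{3,r}$ becoming a single edge); finally add $T$ pendant vertices $u_1,\dots,u_T$ adjacent to $u$ and $T$ pendant vertices $v_1,\dots,v_T$ adjacent to $v$. Then for all sufficiently large $k$, the spectral path from $v_1$ to $u_1$ (with special vertex $u_1$) has length $\ell+3$, while the distance between $v_1$ and $u_1$ is $7$.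
   Context: For a finite connected graph $G$ with Laplacian $L=D-A$ and special vertex $s$ such that $G-s$ is connected, let $L_s$ be $L$ with row and column $s$ deleted, and let $f_s$ be an eigenvector of $L_s$ for its smallest eigenvalue, chosen positive on $V\setminus\{s\}$ (possible by a result of Steinerberger), extended by $f_s(s)=0$. Every vertex $x\ne s$ has a neighbor with strictly smaller $f_s$-value. The spectral tree $T_s$ is formed by joining each vertex $x\neq s$ to a neighbor minimizing $f_s$ (ties broken arbitrarily); the spectral path from $x$ to $s$ is the unique path from $x$ to $s$ in $T_s$. Length of a path is its number of edges. *)

(* Defs.v *)
From HB Require Import structures.
From mathcomp Require Import all_boot all_order all_algebra.
From mathcomp Require Import reals.
Set Implicit Arguments. Unset Strict Implicit. Unset Printing Implicit Defensive.
Import Order.TTheory GRing.Theory Num.Theory.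
Local Open Scope ring_scope.

(* Vertices (with T pendant vertices on each side):
   HU            = u
   HV            = v
   HX i r        = x_{i+1, r+1}    (i : 'I_l, so x_1 .. x_l; r : 'I_k)
   HY1 r         = y_{1, r+1}
   HY4 r         = y_{4, r+1}
   HY2           = y_{2,*}
   HY3           = y_{3,*}
   HPU j         = u_{j+1}        (j : 'I_T)
   HPV j         = v_{j+1}        (j : 'I_T)
   (x_{0,r} = y_{0,r} = u and x_{l+1,r} = y_{5,r} = v after identification.) *)
Inductive hvert (l k T : nat) : Type :=
| HU | HV
| HX of 'I_l & 'I_k
| HY1 of 'I_k | HY4 of 'I_k
| HY2 | HY3
| HPU of 'I_T | HPV of 'I_T.

Arguments HU {l k T}. Arguments HV {l k T}.
Arguments HY2 {l k T}. Arguments HY3 {l k T}.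
Arguments HX {l k T}. Arguments HY1 {l k T}. Arguments HY4 {l k T}.
Arguments HPU {l k T}. Arguments HPV {l k T}.

Section HvertFin.
Variables l k T : nat.
Definition hcode_t : Type :=
  (((unit + unit) + ('I_l * 'I_k)) + ('I_k + 'I_k)) + ((unit + unit) + ('I_T + 'I_T)).
Definition hencode (x : hvert l k T) : hcode_t :=
  match x with
  | HU => inl (inl (inl (inl tt)))
  | HV => inl (inl (inl (inr tt)))
  | HX i r => inl (inl (inr (i, r)))
  | HY1 r => inl (inr (inl r))
  | HY4 r => inl (inr (inr r))
  | HY2 => inr (inl (inl tt))
  | HY3 => inr (inl (inr tt))
  | HPU j => inr (inr (inl j))
  | HPV j => inr (inr (inr j))
  end.
Definition hdecode (c : hcode_t) : hvert l k T :=
  match c with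
  | inl (inl (inl (inl _))) => HU
  | inl (inl (inl (inr _))) => HV
  | inl (inl (inr (i, r))) => HX i r
  | inl (inr (inl r)) => HY1 r
  | inl (inr (inr r)) => HY4 r
  | inr (inl (inl _)) => HY2
  | inr (inl (inr _)) => HY3
  | inr (inr (inl j)) => HPU j
  | inr (inr (inr j)) => HPV j
  end.
Lemma hencodeK : cancel hencode hdecode. Proof. by case. Qed.
HB.instance Definition _ := Equality.copy (hvert l k T) (can_type hencodeK).
HB.instance Definition _ := Choice.copy (hvert l k T) (can_type hencodeK).
HB.instance Definition _ := Countable.copy (hvert l k T) (can_type hencodeK).
HB.instance Definition _ := Finite.copy (hvert l k T) (can_type hencodeK).
End HvertFin.

Definition hedge (l k T : nat) (a b : hvert l k T) : bool :=
  match a, b with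
  | HU, HX i _ => val i == 0%N
  | HX i r, HX i' r' => (r == r') && (val i' == (val i).+1)
  | HX i _, HV => val i == l.-1
  | HU, HY1 _ => true
  | HY1 _, HY2 => true
  | HY2, HY3 => true
  | HY3, HY4 _ => true
  | HY4 _, HV => true
  | HU, HPU _ => true
  | HV, HPV _ => true
  | _, _ => false
  end.

Definition hadj (l k T : nat) : rel (hvert l k T) :=
  fun a b => hedge a b || hedge b a.

(* T = floor (t k) (t > 0, so truncn = floor). *)
Definition Tof (R : realType) (t : R) (k : nat) : nat := Num.truncn (t * k%:R).

Section GraphNotions.
Variables (R : realType) (V : finType) (adj : rel V).

Definition deg (x : V) : nat := #|[set y | adj x y]|.

Definition lap (g : V -> R) (x : V) : R :=
  (deg x)%:R * g x - \sum_(y | adj x y) g y.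

(* Vectors of R^(V \ {s}) are represented as functions V -> R vanishing at s;
   then (L_s g)(x) = (L g)(x) for x != s.
   mu is an eigenvalue of L_s with eigenvector g: *)
Definition Ls_eigenpair (s : V) (mu : R) (g : V -> R) : Prop :=
  g s = 0 /\ (exists x, x != s /\ g x != 0) /\
  (forall x, x != s -> lap g x = mu * g x).

Definition Ls_eigenvalue (s : V) (mu : R) : Prop :=
  exists g, Ls_eigenpair s mu g.

Definition is_fs (s : V) (f : V -> R) : Prop :=
  (exists lam, Ls_eigenpair s lam f /\ forall mu, Ls_eigenvalue s mu -> lam <= mu)
  /\ (forall x, x != s -> 0 < f x).

(* p is a parent map of a spectral tree T_s: each x != s is joined to a
   neighbour p x minimising f (ties broken arbitrarily). *)
Definition spectral_parent (s : V) (f : V -> R) (p : V -> V) : Prop :=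
  forall x, x != s -> adj x (p x) /\ (forall y, adj x y -> f (p x) <= f y).

(* The spectral path from x to s (the path from x to s in T_s, i.e. the
   parent chain) has length n. *)
Definition spectral_path_length (s : V) (p : V -> V) (x : V) (n : nat) : Prop :=
  iter n p x = s /\ forall m, (m < n)%N -> iter m p x != s.

Definition gdist (x y : V) (n : nat) : Prop :=
  (exists q : seq V, [/\ path adj x q, last x q = y & size q = n]) /\
  (forall q : seq V, path adj x q -> last x q = y -> (n <= size q)%N).

End GraphNotions.

(* Main.v *)
Require Import Defs.
From HB Require Import structures.
From mathcomp Require Import all_boot all_order all_algebra.
From mathcomp Require Import reals.
From mathcomp Require Import ring lra zify.
Import Order.TTheory GRing.Theory Num.Theory.
Local Open Scope ring_scope.
Set Implicit Arguments. Unset Strict Implicit. Unset Printing Implicit Defensive.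

Section Gen.
Variables (R : realType) (V : finType) (adj : rel V).

Lemma lapE (g : V -> R) x : lap adj g x = \sum_(y | adj x y) (g x - g y).
Proof.
rewrite /lap /deg sumrB; congr (_ - _).
rewrite sumr_const mulr_natl; congr (_ *+ _).
by apply: eq_card => y; rewrite inE.
Qed.

Lemma lap_sum0 (g : V -> R) : symmetric adj -> \sum_x lap adj g x = 0.
Proof.
move=> sym; under eq_bigr do rewrite lapE sumrB.
rewrite sumrB [X in _ - X](exchange_big_dep xpredT) //=.
rewrite [X in _ - X](eq_bigr (fun y => \sum_(x | adj y x) g y)).
  by rewrite subrr.
by move=> y _; apply: eq_bigl => x; rewrite sym.
Qed.
End Gen.
Lemma hsum_dec (R : realType) l k T (F : hvert l k T -> R) :
  \sum_y F y = F HU + F HV + \sum_i \sum_r F (HX i r) + \sum_r F (HY1 r)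
     + \sum_r F (HY4 r) + F HY2 + F HY3 + \sum_j F (HPU j) + \sum_j F (HPV j).
Proof.
rewrite (reindex (@hdecode l k T)); last first.
  by exists (@hencode l k T) => x _; [case: x => [[[[[]|[]]|[]]|[]]|[[[]|[]]|[]]] | case: x].
rewrite !big_sumType /= !sumr_const !card_unit !mulr1n.
rewrite pair_bigA /= (eq_bigr (fun p => F (HX p.1 p.2))); last by case.
by rewrite !addrA.
Qed.
Lemma lap_dec (R : realType) l k T (g : hvert l k T -> R) x :
  lap (@hadj l k T) g x =
  let F := fun y => if hadj x y then g x - g y else 0 in
  F HU + F HV + \sum_i \sum_r F (HX i r) + \sum_r F (HY1 r)
     + \sum_r F (HY4 r) + F HY2 + F HY3 + \sum_j F (HPU j) + \sum_j F (HPV j).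
Proof. by rewrite lapE big_mkcond hsum_dec. Qed.
Section Sums.
Variable R : realType.

Lemma sum_if_nat n (F : 'I_n.+1 -> R) (m : nat) :
  \sum_(i < n.+1) (if val i == m then F i else 0) = if (m < n.+1)%N then F (inord m) else 0.
Proof.
case: ifP => Hm.
  rewrite -big_mkcond (big_pred1 (inord m)) // => i /=.
  by apply/eqP/eqP => [<-|->]; [rewrite inord_val | rewrite inordK].
rewrite big1 // => i _; case: eqP => // E.
by move: (ltn_ord i); rewrite E Hm.
Qed.

Lemma sum_pair_cond n (G : 'I_n -> R) r (A B : bool) :
  \sum_(r0 < n) (if (r == r0) && A || (r0 == r) && B then G r0 else 0) =
  if A || B then G r else 0.
Proof.
rewrite (bigD1 r) //= eqxx /= big1 ?addr0 // => r0 /negbTE ne.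
by rewrite [r == r0]eq_sym ne.
Qed.

Lemma sum_nb n (F : 'I_n.+1 -> R) (i : nat) :
  \sum_(i0 < n.+1) (if (val i0 == i.+1) || (i == (val i0).+1) then F i0 else 0) =
  (if (i.+1 < n.+1)%N then F (inord i.+1) else 0) +
  (if (0 < i)%N && (i.-1 < n.+1)%N then F (inord i.-1) else 0).
Proof.
rewrite -(sum_if_nat F i.+1).
have -> : (if (0 < i)%N && (i.-1 < n.+1)%N then F (inord i.-1) else 0) =
   \sum_(i0 < n.+1) (if val i0 == i.-1 then (if (0 < i)%N then F i0 else 0) else 0).
  case: (ltnP 0 i) => _ /=.
    by rewrite (sum_if_nat F i.-1).
  by rewrite big1 // => j _; case: ifP.
rewrite -big_split /=; apply: eq_bigr => j _.
case: (ltnP 0 i) => [i0|]; last first.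
  rewrite leqn0 => /eqP ->; rewrite !orbF /=.
  by rewrite if_same addr0.
have -> : (i == (val j).+1) = (val j == i.-1) by apply/eqP/eqP; lia.
change (\val j) with (nat_of_ord j).
case: (eqVneq (nat_of_ord j) i.+1) => [->|ne] /=.
  have -> : (i.+1 == i.-1) = false by apply/eqP; lia.
  by rewrite addr0.
by rewrite add0r.
Qed.
End Sums.

Section Seq.
Variable R : realFieldType.

Fixpoint Useq (lam : R) (j : nat) : R :=
  match j with 0 => 0 | 1 => 1 | (j.+1 as j').+1 => (2 - lam) * Useq lam j' - Useq lam j end.

Lemma Useq_bnd (lam : R) n : 0 <= lam -> lam * (n%:R ^+ 2) <= 1 ->
  forall i, (i <= n)%N ->
  [/\ 0 <= Useq lam i, Useq lam i <= i%:R,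
      1 - lam * i%:R ^+ 2 <= Useq lam i.+1 - Useq lam i & Useq lam i.+1 - Useq lam i <= 1].
Proof.
move=> l0 ln; elim=> [|i IH] Hi.
  by rewrite /= expr0n /= mulr0 subr0; split=> //; lra.
have [u0 ui e1 e2] := IH (ltnW Hi).
have Hl : lam * i.+1%:R ^+ 2 <= 1.
  apply: le_trans ln; rewrite ler_wpM2l // lerXn2r ?nnegrE ?ler0n //.
  by rewrite ler_nat.
have ->: Useq lam i.+2 = (2 - lam) * Useq lam i.+1 - Useq lam i by [].
have hS : i.+1%:R = i%:R + 1 :> R by rewrite -addn1 natrD.
rewrite hS in Hl *.
have hi0 : 0 <= i%:R :> R by [].
set x := i%:R in ui e1 Hl hi0 *.
set u := Useq lam i in u0 ui e1 e2 *.
set v := Useq lam i.+1 in e1 e2 *.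
have v0 : 0 <= v.
  have : lam * x ^+ 2 <= lam * (x + 1) ^+ 2 by nra.
  lra.
have p1 : lam * v <= lam * (x + 1) by nra.
have p2 : 0 <= lam * v by nra.
have p3 : 0 <= lam * x by nra.
have ex : (x + 1) ^+ 2 = x ^+ 2 + 2 * x + 1 by ring.
rewrite ex in Hl *.
have q : (2 - lam) * v - u - v = (v - u) - lam * v by ring.
rewrite q.
have q2 : lam * (x ^+ 2 + 2 * x + 1) = lam * x ^+ 2 + 2 * (lam * x) + lam by ring.
rewrite q2 in Hl *.
have q3 : lam * (x + 1) = lam * x + lam by ring.
rewrite q3 in p1.
split; lra.
Qed.

Definition recur (lam : R) (g : nat -> R) n :=
  forall j, (0 < j < n)%N -> g j.+1 = (2 - lam) * g j - g j.-1.

Lemma Useq_lin (lam : R) (d : nat -> R) n : d 0%N = 0 -> recur lam d n ->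
  forall j, (j < n)%N -> d j = d 1%N * Useq lam j /\ d j.+1 = d 1%N * Useq lam j.+1.
Proof.
move=> d0 rec; elim=> [|j IH] Hj.
  by rewrite d0 /= mulr0 mulr1.
have [IH1 IH2] := IH (ltnW Hj); split=> //.
rewrite rec /=; last by rewrite Hj.
rewrite IH1 IH2 /=; ring.
Qed.

Lemma seq_unique (lam : R) n (g h : nat -> R) : 0 <= lam -> lam * (n%:R ^+ 2) < 1 ->
  (0 < n)%N -> recur lam g n -> recur lam h n -> g 0%N = h 0%N -> g n = h n ->
  forall j, (j <= n)%N -> g j = h j.
Proof.
move=> l0 ln n0 rg rh e0 en.
pose d j := g j - h j.
have rd : recur lam d n by move=> j Hj; rewrite /d rg // rh //; ring.
have d0 : d 0%N = 0 by rewrite /d e0 subrr.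
have lin := Useq_lin d0 rd.
have Un : 0 < Useq lam n.
  case: n n0 ln lin en {rg rh rd} => // m _ ln lin en.
  have [u0 _ e1 _] := Useq_bnd l0 (ltW ln) (leqnSn m).
  have : lam * m%:R ^+ 2 < 1.
    apply: le_lt_trans ln.
    by rewrite ler_wpM2l // lerXn2r ?nnegrE ?ler0n // ler_nat.
  lra.
have d1 : d 1%N = 0.
  case: n n0 ln lin en Un {rg rh rd} => // m _ ln lin en Un.
  have [_ L] := lin m (leqnn _).
  have : d m.+1 = 0 by rewrite /d en subrr.
  rewrite L => /eqP; rewrite mulf_eq0 => /orP[/eqP //|/eqP U0].
  by rewrite U0 ltxx in Un.
move=> j Hj; apply/eqP; rewrite -subr_eq0; apply/eqP.
case: (ltngtP j n) Hj => // [jn|->] _.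
  by have [L _] := lin j jn; rewrite -/(d j) L d1 mul0r.
by rewrite en subrr.
Qed.

Lemma recur_d (lam : R) g n i : recur lam g n -> (0 < i < n)%N ->
  g i - g i.-1 = (g i.+1 - g i) + lam * g i.
Proof. by move=> r Hi; rewrite (r i Hi); ring. Qed.

Lemma pth_d (lam M : R) n g : 0 <= lam -> 0 <= M -> recur lam g n ->
  (forall j, (0 < j < n)%N -> g j <= M) ->
  forall m, (m < n)%N -> g (n - m)%N - g (n - m).-1 <= g n - g n.-1 + lam * m%:R * M.
Proof.
move=> l0 M0 r gM; elim=> [|m IH] Hm.
  by rewrite subn0 mulr0n mulr0 mul0r addr0.
have Hi : (0 < n - m.+1 < n)%N by apply/andP; split; lia.
rewrite (recur_d r Hi).
have -> : (n - m.+1).+1 = (n - m)%N by lia.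
have := IH (ltnW Hm).
have := gM _ Hi.
have hS : m.+1%:R = m%:R + 1 :> R by rewrite -addn1 natrD.
rewrite hS.
move=> h1 h2.
have : lam * g (n - m.+1)%N <= lam * M by rewrite ler_wpM2l.
have -> : lam * (m%:R + 1) * M = lam * m%:R * M + lam * M by ring.
have e : (n - m).-1 = (n - m.+1)%N by lia.
rewrite e in h2.
lra.
Qed.

Lemma pth_up (lam M : R) n g : 0 <= lam -> 0 <= M -> recur lam g n ->
  (forall j, (0 < j < n)%N -> g j <= M) ->
  forall j, (j <= n)%N -> g j <= g 0%N + j%:R * ((g n - g n.-1) + lam * n%:R * M).
Proof.
move=> l0 M0 r gM.
have dB : forall i, (0 < i <= n)%N -> g i - g i.-1 <= (g n - g n.-1) + lam * n%:R * M.
  move=> i /andP[i0 iN].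
  have := pth_d l0 M0 r gM (m := (n - i)%N) ltac:(lia).
  have -> : (n - (n - i))%N = i by lia.
  move=> h; apply: le_trans h _; rewrite lerD2l.
  by rewrite -!mulrA ler_wpM2l // ler_wpM2r // ler_nat leq_subr.
elim=> [|j IH] Hj.
  by rewrite mul0r addr0.
have := dB j.+1 ltac:(lia); rewrite /= => h.
have := IH (ltnW Hj).
have hS : j.+1%:R = j%:R + 1 :> R by rewrite -addn1 natrD.
rewrite hS mulrDl mul1r.
lra.
Qed.

Lemma pth_mono (lam : R) n g : 0 <= lam -> recur lam g n ->
  (forall j, (0 < j < n)%N -> 0 <= g j) -> 0 < g n - g n.-1 ->
  forall m, (m < n)%N -> 0 < g (n - m)%N - g (n - m).-1.
Proof.
move=> l0 r gp dn; elim=> [|m IH] Hm; first by rewrite subn0.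
have Hi : (0 < n - m.+1 < n)%N by apply/andP; split; lia.
rewrite (recur_d r Hi).
have -> : (n - m.+1).+1 = (n - m)%N by lia.
have e : (n - m).-1 = (n - m.+1)%N by lia.
have := IH (ltnW Hm); rewrite e.
have : 0 <= lam * g (n - m.+1)%N by rewrite mulr_ge0 // gp.
lra.
Qed.

Lemma pth_le (lam : R) n g : 0 <= lam -> recur lam g n ->
  (forall j, (0 < j < n)%N -> 0 <= g j) -> 0 < g n - g n.-1 ->
  forall j, (j <= n)%N -> g j <= g n.
Proof.
move=> l0 r gp dn.
suff H : forall m, (m <= n)%N -> g (n - m)%N <= g n.
  by move=> j Hj; have := H (n - j)%N (leq_subr _ _); rewrite subKn.
elim=> [|m IH] Hm; first by rewrite subn0.
have := pth_mono l0 r gp dn (m := m) Hm.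
have -> : (n - m).-1 = (n - m.+1)%N by lia.
have := IH (ltnW Hm); lra.
Qed.
End Seq.

Section Pure.
Variable R : realFieldType.

Lemma y2_ge_a (lam a y1 y2 y3 kr : R) : 0 < lam -> lam <= 1/2 -> 1 <= kr -> 0 < y2 ->
  kr * (y2 - y1) + (y2 - y3) = lam * y2 ->
  (y1 - a) + (y1 - y2) = lam * y1 -> y2 <= y3 -> a <= y2.
Proof.
move=> l0 l1 k1 y20 Y2 Y1 h.
have e1 : kr * y1 <= (kr - lam) * y2 by rewrite mulrBl; move: Y2; rewrite mulrBr; lra.
have e2 : (2 - lam) * y1 = a + y2 by rewrite mulrBl; move: Y1; lra.
have e3 : kr * (a + y2) <= (2 - lam) * ((kr - lam) * y2).
  rewrite -e2 mulrA (mulrC kr) -mulrA; apply: ler_wpM2l e1; lra.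
have e5 : (2 - lam) * (kr - lam) <= 2 * kr by nra.
have e4 : (2 - lam) * ((kr - lam) * y2) <= 2 * kr * y2.
  by rewrite mulrA ler_wpM2r // ltW.
nra.
Qed.


Lemma claimB (lam a b Q y1 y2 y3 y4 xl kr Tr C : R) :
  0 < lam -> lam <= 1/2 -> 1 <= kr -> 0 < a -> 0 < b -> 0 < Q -> 0 < y2 -> 0 < y3 -> 0 < y4 ->
  0 <= Tr -> 0 <= C ->
  kr * (b - xl) + kr * (b - y4) + Tr * (b - Q) = lam * b ->
  Q - b = lam * Q ->
  (y4 - y3) + (y4 - b) = lam * y4 ->
  kr * (y3 - y4) + (y3 - y2) = lam * y3 ->
  kr * (y2 - y1) + (y2 - y3) = lam * y2 ->
  (y1 - a) + (y1 - y2) = lam * y1 ->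
  (b <= xl -> b - a <= lam * C * a) -> C <= Tr -> xl < b.
Proof.
move=> l0 l1 k1 a0 b0 Q0 y20 y30 y40 T0 C0 EV PV Y4 Y3 Y2 Y1 hB hT.
rewrite ltNge; apply/negP => h.
have Qb : b <= Q by have := mulr_gt0 l0 Q0; lra.
have p1 : Tr * (Q - b) = lam * (Tr * Q) by rewrite PV; ring.
have p2 : lam * (Tr * b) <= lam * (Tr * Q)
  by apply: ler_wpM2l; [exact: ltW | exact: ler_wpM2l].
have p3 : 0 <= kr * (xl - b) by rewrite mulr_ge0 //; lra.
have lb0 : 0 < lam * b by rewrite mulr_gt0.
have p0 : 0 <= lam * (Tr * b) := mulr_ge0 (ltW l0) (mulr_ge0 T0 (ltW b0)).
have s2 : lam * b + lam * (Tr * b) <= kr * (b - y4).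
  have e : kr * (b - y4) = lam * b + Tr * (Q - b) + kr * (xl - b).
    by move: EV; rewrite !mulrBr; lra.
  lra.
have s3 : 0 < b - y4.
  have : 0 < kr * (b - y4) by have := mulr_ge0 (ltW l0) (mulr_ge0 T0 (ltW b0)); lra.
  by rewrite pmulr_rgt0 //; lra.
have s4 : b - y4 <= y4 - y3 by have := mulr_gt0 l0 y40; lra.
have s5 : kr * (b - y4) <= kr * (y4 - y3) by apply: ler_wpM2l; lra.
have s6 : kr * (y4 - y3) <= y3 - y2.
  have e : y3 - y2 = lam * y3 + kr * (y4 - y3) by move: Y3; rewrite !mulrBr; lra.
  by have := mulr_gt0 l0 y30; lra.
have ay2 : a <= y2 by apply: (y2_ge_a l0 l1 k1 y20 Y2 Y1); have := mulr_ge0 (ltW l0) (mulr_ge0 T0 (ltW b0)); lra.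
have s7 : lam * (Tr * b) < b - a by lra.
have s8 : b - a <= lam * C * b.
  apply: le_trans (hB h) _; apply: ler_wpM2l; first by rewrite mulr_ge0 // ltW.
  lra.
have : lam * (Tr * b) < lam * (C * b) by rewrite mulrA; lra.
rewrite ltr_pM2l // ltr_pM2r //; lra.
Qed.


Lemma claimA (lam a b Q y1 y2 y3 y4 xl kr Tr nr t : R) :
  0 < lam -> lam <= 1/2 -> 1 <= kr -> 0 < a -> 0 < b -> 0 < Q -> 0 < y2 -> 0 < y3 -> 0 < y4 ->
  0 <= Tr -> 0 <= nr -> 0 < t ->
  kr * (b - xl) + kr * (b - y4) + Tr * (b - Q) = lam * b ->
  Q - b = lam * Q ->
  (y4 - y3) + (y4 - b) = lam * y4 ->
  kr * (y3 - y4) + (y3 - y2) = lam * y3 ->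
  kr * (y2 - y1) + (y2 - y3) = lam * y2 ->
  (y1 - a) + (y1 - y2) = lam * y1 ->
  xl < b -> b - a <= nr * (b - xl) + lam * nr ^+ 2 * b ->
  Tr <= t * kr -> nr + 2 * nr * t + 2 * nr ^+ 2 <= Tr -> xl < y4.
Proof.
move=> l0 l1 k1 a0 b0 Q0 y20 y30 y40 T0 n0 t0 EV PV Y4 Y3 Y2 Y1 xb hA hTk hT.
rewrite ltNge; apply/negP => h.
have Qb : b <= Q by have := mulr_gt0 l0 Q0; lra.
have Q2 : Q <= 2 * b.
  have : lam * Q <= 1/2 * Q by apply: ler_wpM2r; lra.
  lra.
set Phi := lam * b + lam * (Tr * Q).
have p1 : Tr * (Q - b) = lam * (Tr * Q) by rewrite PV; ring.
have E : kr * (b - xl) + kr * (b - y4) = Phi.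
  by move: EV; rewrite /Phi -p1 !mulrBr; lra.
have d1 : kr * (b - xl) <= kr * (b - y4) by apply: ler_wpM2l; lra.
have kB0 : 0 < kr * (b - xl) by rewrite mulr_gt0 //; lra.
have s4 : b - y4 <= y4 - y3 by have := mulr_gt0 l0 y40; lra.
have s5 : kr * (b - y4) <= kr * (y4 - y3) by apply: ler_wpM2l; lra.
have s6 : kr * (y4 - y3) <= y3 - y2.
  have e : y3 - y2 = lam * y3 + kr * (y4 - y3) by move: Y3; rewrite !mulrBr; lra.
  by have := mulr_gt0 l0 y30; lra.
have ay2 : a <= y2 by apply: (y2_ge_a l0 l1 k1 y20 Y2 Y1); lra.
have y4b : y4 < b.
  have : 0 < kr * (b - y4) by lra.
  by rewrite pmulr_rgt0; lra.
have s7 : Phi < 2 * (b - a) by lra.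
(* 2 kr (b-a) <= 2 kr nr (b - xl) + 2 kr lam nr^2 b <= nr Phi + 2 kr lam nr^2 b *)
have s8 : kr * Phi < nr * Phi + 2 * kr * (lam * nr ^+ 2 * b).
  have h1 : kr * Phi < 2 * kr * (b - a).
    have -> : 2 * kr * (b - a) = kr * (2 * (b - a)) by ring.
    by rewrite ltr_pM2l; lra.
  have h2 : 2 * kr * (b - a) <= 2 * kr * (nr * (b - xl) + lam * nr ^+ 2 * b).
    by apply: ler_wpM2l => //; lra.
  have h3 : 2 * kr * (nr * (b - xl)) <= nr * Phi.
    have : 2 * (kr * (b - xl)) <= Phi by lra.
    move=> h4; rewrite mulrCA -mulrA; apply: ler_wpM2l => //.
  move: h1 h2 h3; rewrite mulrDr; lra.
have u0 : 0 < lam * b by rewrite mulr_gt0.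
have P1 : lam * b * Tr <= Phi.
  have : lam * (Tr * b) <= lam * (Tr * Q).
    by apply: ler_wpM2l; [exact: ltW | exact: ler_wpM2l].
  have -> : lam * b * Tr = lam * (Tr * b) by ring.
  rewrite /Phi; have := ltW u0; lra.
have P2 : Phi <= lam * b * (1 + 2 * Tr).
  have : lam * (Tr * Q) <= lam * (Tr * (2 * b)).
    by apply: ler_wpM2l; [exact: ltW | exact: ler_wpM2l].
  have -> : lam * b * (1 + 2 * Tr) = lam * b + lam * (Tr * (2 * b)) by ring.
  rewrite /Phi; lra.
have F1 : kr * (lam * b * Tr) <= kr * Phi by apply: ler_wpM2l => //; lra.
have F2 : nr * Phi <= nr * (lam * b * (1 + 2 * Tr)) by apply: ler_wpM2l.
have G0 : lam * b * (kr * Tr) < lam * b * (nr * (1 + 2 * Tr) + 2 * kr * nr ^+ 2).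
  have e1 : lam * b * (kr * Tr) = kr * (lam * b * Tr) by ring.
  have e2 : lam * b * (nr * (1 + 2 * Tr) + 2 * kr * nr ^+ 2) =
            nr * (lam * b * (1 + 2 * Tr)) + 2 * kr * (lam * nr ^+ 2 * b) by ring.
  rewrite e1 e2; lra.
have G : kr * Tr < nr * (1 + 2 * Tr) + 2 * kr * nr ^+ 2 by move: G0; rewrite ltr_pM2l.
have H1 : nr * Tr <= nr * (t * kr) by apply: ler_wpM2l.
have H2 : nr <= nr * kr by rewrite -[X in X <= _]mulr1; apply: ler_wpM2l.
have H3 : kr * (nr + 2 * nr * t + 2 * nr ^+ 2) <= kr * Tr by apply: ler_wpM2l => //; lra.
have e3 : kr * (nr + 2 * nr * t + 2 * nr ^+ 2) = nr * kr + 2 * (nr * (t * kr)) + 2 * kr * nr ^+ 2 by ring.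
have e4 : nr * (1 + 2 * Tr) = nr + 2 * (nr * Tr) by ring.
rewrite e3 in H3; rewrite e4 in G.
lra.
Qed.


End Pure.

Section Main.
Variables (R : realType) (l' k' T : nat).
Local Notation l := l'.+1.
Local Notation k := k'.+1.
Local Notation V := (hvert l k T).
Variables (i0 : 'I_T) (f : V -> R) (lam : R).
Hypothesis hf0 : f (HPU i0) = 0.
Hypothesis hpos : forall x, x != HPU i0 -> 0 < f x.
Hypothesis heig : forall x, x != HPU i0 -> lap (@hadj l k T) f x = lam * f x.

Local Notation a := (f HU).
Local Notation b := (f HV).

Ltac simp_lap := rewrite lap_dec /hadj /= ?big1_eq ?addr0 ?add0r.

Lemma E_PV j : f (HPV j) - b = lam * f (HPV j).
Proof. by rewrite -heig //; simp_lap. Qed.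

Lemma E_PU j : j != i0 -> f (HPU j) - a = lam * f (HPU j).
Proof.
move=> ne; rewrite -heig; last by apply/negP => /eqP [E]; rewrite E eqxx in ne.
by simp_lap.
Qed.

Lemma E_Y4 r : (f (HY4 r) - f HY3) + (f (HY4 r) - b) = lam * f (HY4 r).
Proof. by rewrite -heig //; simp_lap; rewrite addrC. Qed.

Lemma E_Y1 r : (f (HY1 r) - a) + (f (HY1 r) - f HY2) = lam * f (HY1 r).
Proof. by rewrite -heig //; simp_lap. Qed.

Lemma E_Y3 : \sum_r (f HY3 - f (HY4 r)) + (f HY3 - f HY2) = lam * f HY3.
Proof. by rewrite -heig //; simp_lap. Qed.

Lemma E_Y2 : \sum_r (f HY2 - f (HY1 r)) + (f HY2 - f HY3) = lam * f HY2.
Proof. by rewrite -heig //; simp_lap. Qed.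

Lemma E_V : \sum_r (b - f (HX ord_max r)) + \sum_r (b - f (HY4 r)) + \sum_j (b - f (HPV j)) = lam * b.
Proof.
rewrite -heig //; simp_lap; congr (_ + _ + _).
rewrite exchange_big; apply: eq_bigr => r _.
rewrite (sum_if_nat (fun i => b - f (HX i r)) l') ltnSn.
by congr (_ - f (HX _ r)); apply: val_inj; rewrite /= inordK.
Qed.


Definition g r (j : nat) : R :=
  match j with 0 => a | j'.+1 => if (j' < l)%N then f (HX (inord j') r) else b end.

Lemma g_rec r : recur lam (g r) l.+1.
Proof.
move=> [|j] // /andP [_ Hj].
have E := @heig (HX (inord j) r) isT.
rewrite lap_dec /hadj /= ?big1_eq ?addr0 ?add0r in E.
move: E; under eq_bigr => i1 _ do rewrite sum_pair_cond.
move=> E.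
rewrite (sum_nb (fun i0 => f (HX (inord j) r) - f (HX i0 r))) in E.
rewrite inordK // in E.
have Hj' : (j < l)%N := Hj.
rewrite /= Hj'.
move: E; rewrite mulrBl orbF.
case: j Hj Hj' => [|j1] Hj Hj' /=;
repeat (case: ifP => /= ?); move=> E; first [lra | exfalso; lia].
Qed.

Lemma hadj_sym : symmetric (@hadj l k T).
Proof. by move=> x y; rewrite /hadj orbC. Qed.

Lemma fge0 x : 0 <= f x.
Proof. by case: (eqVneq x (HPU i0)) => [->|/hpos/ltW] //; rewrite hf0. Qed.

Lemma flux : lam * \sum_x f x = a.
Proof.
have := lap_sum0 f hadj_sym.
rewrite (bigD1 (HPU i0)) //=.
rewrite (eq_bigr (fun x => lam * f x)); last by move=> x /heig.
rewrite -mulr_sumr.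
have -> : \sum_x f x = \sum_(x | x != HPU i0) f x.
  by rewrite (bigD1 (HPU i0)) //= hf0 add0r.
have -> : lap (@hadj l k T) f (HPU i0) = - a.
  by rewrite lap_dec /hadj /= ?big1_eq ?addr0 ?add0r hf0 sub0r.
move=> /eqP; rewrite addrC subr_eq0 => /eqP //.
Qed.

Lemma sum_ge_PU : \sum_j f (HPU j) <= \sum_x f x.
Proof.
rewrite hsum_dec.
have h1 := fge0.
have s1 : 0 <= \sum_i \sum_r f (HX i r) by do 2 (apply: sumr_ge0 => ? _).
have s2 : 0 <= \sum_r f (HY1 r) by apply: sumr_ge0 => ? _.
have s3 : 0 <= \sum_r f (HY4 r) by apply: sumr_ge0 => ? _.
have s4 : 0 <= \sum_j f (HPV j) by apply: sumr_ge0 => ? _.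
have := h1 HU; have := h1 HV; have := h1 HY2; have := h1 HY3.
lra.
Qed.

Lemma sum_ge0 : 0 <= \sum_x f x.
Proof. by apply: sumr_ge0 => x _; exact: fge0. Qed.

Lemma lam_pos : 0 < lam.
Proof.
have := flux; have := sum_ge0; have := @hpos HU isT.
set S := \sum_x f x => a0 S0 fl.
rewrite ltNge; apply/negP => h.
have := mulr_le0_ge0 h S0; lra.
Qed.

Lemma lam_lt1 : lam < 1.
Proof.
have := E_PV i0; have := @hpos (HPV i0) isT; have := @hpos HV isT => b0 Q0 e.
have : lam * f (HPV i0) < 1 * f (HPV i0) by lra.
by rewrite ltr_pM2r.
Qed.

Lemma lamT : lam * (T%:R - 1) <= 1.
Proof.
have a0 := @hpos HU isT.
have l0 := lam_pos.
have h : \sum_(j < T) (a - (if j == i0 then a else 0)) <= \sum_j f (HPU j).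
  apply: ler_sum => j _; case: eqVneq => [->|ne].
    by rewrite hf0 subrr.
  have := E_PU ne; have := mulr_ge0 (ltW l0) (fge0 (HPU j)); lra.
rewrite sumrB sumr_const card_ord -big_mkcond big_pred1_eq in h.
have h2 := le_trans h sum_ge_PU.
have h3 : lam * (a *+ T - a) <= lam * \sum_x f x by apply: ler_wpM2l => //; exact: ltW.
rewrite flux in h3.
have : lam * (T%:R - 1) * a <= 1 * a.
  have -> : lam * (T%:R - 1) * a = lam * (a *+ T - a) by rewrite -mulr_natl; ring.
  by rewrite mul1r.
by rewrite ler_pM2r.
Qed.

Lemma Y1_eq r : f (HY1 r) = f (HY1 ord0).
Proof.
have := E_Y1 r; have := E_Y1 ord0; have := lam_lt1 => l1 e1 e2.
have : (2 - lam) * f (HY1 r) = (2 - lam) * f (HY1 ord0) by rewrite !mulrBl; lra.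
by move/mulfI; apply; apply/eqP; lra.
Qed.

Lemma Y4_eq r : f (HY4 r) = f (HY4 ord0).
Proof.
have := E_Y4 r; have := E_Y4 ord0; have := lam_lt1 => l1 e1 e2.
have : (2 - lam) * f (HY4 r) = (2 - lam) * f (HY4 ord0) by rewrite !mulrBl; lra.
by move/mulfI; apply; apply/eqP; lra.
Qed.

Lemma PV_eq j : f (HPV j) = f (HPV i0).
Proof.
have := E_PV j; have := E_PV i0; have := lam_lt1 => l1 e1 e2.
have : (1 - lam) * f (HPV j) = (1 - lam) * f (HPV i0) by rewrite !mulrBl; lra.
by move/mulfI; apply; apply/eqP; lra.
Qed.

Local Notation nr := ((l.+1)%:R : R).
Hypothesis hT1 : 2 * (nr + 1) ^+ 3 + 1 <= T%:R.

Lemma lam_small : lam * (nr + 1) ^+ 3 <= 1/2.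
Proof.
have := lamT; have := lam_pos; have := hT1 => hT l0 h.
have : lam * (2 * (nr + 1) ^+ 3) <= lam * (T%:R - 1) by apply: ler_wpM2l; lra.
have -> : lam * (2 * (nr + 1) ^+ 3) = 2 * (lam * (nr + 1) ^+ 3) by ring.
lra.
Qed.

Lemma nr1 : 1 <= nr.
Proof. by rewrite ler1n. Qed.

Lemma lam_half : lam <= 1/2.
Proof.
have := lam_small; have := lam_pos; have := nr1 => n1 l0 h.
have : 1 <= (nr + 1) ^+ 3 by rewrite exprn_ege1 //; lra.
move=> h2; have : lam * 1 <= lam * (nr + 1) ^+ 3 by apply: ler_wpM2l => //; lra.
lra.
Qed.

Lemma lam_n2 : lam * nr ^+ 2 * (nr + 1) <= 1/2.
Proof.
have := lam_small; have := lam_pos; have := nr1 => n1 l0 h.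
have h2 : nr ^+ 2 * (nr + 1) <= (nr + 1) ^+ 3.
  have -> : (nr + 1) ^+ 3 = nr ^+ 2 * (nr + 1) + (2 * nr ^+ 2 + 3 * nr + 1) by ring.
  have := sqr_ge0 nr; lra.
have : lam * (nr ^+ 2 * (nr + 1)) <= lam * (nr + 1) ^+ 3 by apply: ler_wpM2l => //; lra.
rewrite mulrA; lra.
Qed.

Lemma lam_n2' : lam * nr ^+ 2 < 1.
Proof.
have := lam_n2; have := lam_pos; have := nr1 => n1 l0 h.
have : lam * nr ^+ 2 * 1 <= lam * nr ^+ 2 * (nr + 1).
  apply: ler_wpM2l; last lra.
  by rewrite mulr_ge0 ?exprn_ge0 //; lra.
lra.
Qed.

Lemma g_sym r j : (j <= l.+1)%N -> g r j = g ord0 j.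
Proof.
apply: (seq_unique (ltW lam_pos) lam_n2' _ (g_rec r) (g_rec ord0)) => //=.
by rewrite ltnn.
Qed.

Lemma g_pos r j : 0 < g r j.
Proof. by case: j => [|j] /=; [exact: hpos | case: ifP => _; exact: hpos]. Qed.

Local Notation xl := (g ord0 l).

Lemma g_l r : f (HX ord_max r) = xl.
Proof.
rewrite -(g_sym r (leqnSn _)) /= ltnSn.
by congr (f (HX _ r)); apply: val_inj; rewrite /= inordK.
Qed.

Lemma sum_const_k (F : 'I_k -> R) c : (forall r, F r = c) -> \sum_r F r = k%:R * c.
Proof. by move=> h; rewrite (eq_bigr (fun _ => c)) // sumr_const card_ord mulr_natl. Qed.

Lemma sum_const_T (F : 'I_T -> R) c : (forall r, F r = c) -> \sum_r F r = T%:R * c.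
Proof. by move=> h; rewrite (eq_bigr (fun _ => c)) // sumr_const card_ord mulr_natl. Qed.

Lemma EVr : k%:R * (b - xl) + k%:R * (b - f (HY4 ord0)) + T%:R * (b - f (HPV i0)) = lam * b.
Proof.
rewrite -E_V.
rewrite (sum_const_k (c := b - xl)); last by move=> r; rewrite g_l.
rewrite (sum_const_k (c := b - f (HY4 ord0))); last by move=> r; rewrite Y4_eq.
by rewrite (sum_const_T (c := b - f (HPV i0))) // => j; rewrite PV_eq.
Qed.

Lemma EY3r : k%:R * (f HY3 - f (HY4 ord0)) + (f HY3 - f HY2) = lam * f HY3.
Proof. by rewrite -E_Y3 (sum_const_k (c := f HY3 - f (HY4 ord0))) // => r; rewrite Y4_eq. Qed.

Lemma EY2r : k%:R * (f HY2 - f (HY1 ord0)) + (f HY2 - f HY3) = lam * f HY2.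
Proof. by rewrite -E_Y2 (sum_const_k (c := f HY2 - f (HY1 ord0))) // => r; rewrite Y1_eq. Qed.

Lemma g0 : g ord0 0 = a. Proof. by []. Qed.
Lemma gn : g ord0 l.+1 = b. Proof. by rewrite /= ltnn. Qed.

Lemma hA : xl < b -> b - a <= nr * (b - xl) + lam * nr ^+ 2 * b.
Proof.
move=> xb.
have l0 := ltW lam_pos.
have gp : forall j, (0 < j < l.+1)%N -> 0 <= g ord0 j by move=> j _; exact: ltW (g_pos _ _).
have dn : 0 < g ord0 l.+1 - g ord0 (l.+1).-1.
  by rewrite gn -pred_Sn; lra.
have gle := pth_le l0 (g_rec ord0) gp dn.
have b0 : 0 <= b by exact: fge0.
have gM : forall j, (0 < j < l.+1)%N -> g ord0 j <= b.
  by move=> j /andP[_ hj]; rewrite -gn; apply: gle; exact: ltnW.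
have := pth_up l0 b0 (g_rec ord0) gM (leqnn l.+1).
rewrite gn g0 -pred_Sn => h.
have -> : nr * (b - xl) + lam * nr ^+ 2 * b = nr * (b - xl + lam * nr * b) by ring.
lra.
Qed.

Lemma hB : b <= xl -> b - a <= lam * (2 * nr ^+ 2 * (nr + 1)) * a.
Proof.
move=> bx.
have l0 := ltW lam_pos.
set S := \sum_(j < l.+2) g ord0 j.
have gS : forall j, (j < l.+2)%N -> g ord0 j <= S.
  move=> j hj; rewrite /S (bigD1 (Ordinal hj)) //= lerDl.
  by apply: sumr_ge0 => i _; exact: ltW (g_pos _ _).
have S0 : 0 <= S by apply: le_trans (gS 0%N isT); exact: ltW (g_pos _ _).
have gM : forall j, (0 < j < l.+1)%N -> g ord0 j <= S.
  by move=> j /andP[_ hj]; apply: gS; exact: ltnW.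
have hup := pth_up l0 S0 (g_rec ord0) gM.
rewrite gn -pred_Sn g0 in hup.
set d := b - xl in hup.
have d0 : d <= 0 by rewrite /d; lra.
have X0 : 0 <= lam * nr * S by rewrite mulr_ge0 // mulr_ge0.
have hj : forall j, (j <= l.+1)%N -> g ord0 j <= a + nr * (lam * nr * S).
  move=> j jn; apply: le_trans (hup j jn) _; rewrite lerD2l.
  have jr : j%:R <= nr by rewrite ler_nat.
  have j0 : 0 <= j%:R :> R by [].
  case: (lerP 0 (d + lam * nr * S)) => hX.
    apply: le_trans (_ : nr * (d + lam * nr * S) <= _).
      by apply: ler_wpM2r.
    by apply: ler_wpM2l => //; lra.
  have : j%:R * (d + lam * nr * S) <= 0 by rewrite mulr_ge0_le0 //; exact: ltW.
  have : 0 <= nr * (lam * nr * S) by rewrite mulr_ge0.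
  lra.
have Sle : S <= (nr + 1) * (a + nr * (lam * nr * S)).
  have -> : nr + 1 = (l.+2)%:R by rewrite natr1.
  apply: le_trans (_ : S <= \sum_(j < l.+2) (a + nr * (lam * nr * S))) _.
    by apply: ler_sum => j _; apply: hj; rewrite -ltnS.
  by rewrite sumr_const card_ord [X in _ <= X]mulr_natl.
have q := lam_n2.
have e1 : (nr + 1) * (a + nr * (lam * nr * S)) = (nr + 1) * a + (lam * nr ^+ 2 * (nr + 1)) * S by ring.
have e2 : (lam * nr ^+ 2 * (nr + 1)) * S <= 1/2 * S by apply: ler_wpM2r.
have S2 : S <= 2 * (nr + 1) * a by lra.
have hn := hup l.+1 (leqnn _).
rewrite gn in hn.
have e3 : nr * d <= 0 by rewrite mulr_ge0_le0 //.
have e4 : lam * nr ^+ 2 * S <= lam * nr ^+ 2 * (2 * (nr + 1) * a).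
  by apply: ler_wpM2l => //; rewrite mulr_ge0 // exprn_ge0.
have e5 : nr * (d + lam * nr * S) = nr * d + lam * nr ^+ 2 * S by ring.
have e6 : lam * nr ^+ 2 * (2 * (nr + 1) * a) = lam * (2 * nr ^+ 2 * (nr + 1)) * a by ring.
lra.
Qed.

Variable t : R.
Hypothesis ht0 : 0 < t.
Hypothesis hTk : T%:R <= t * k%:R.
Hypothesis hT3 : nr + 2 * nr * t + 2 * nr ^+ 2 <= T%:R.

Lemma k1 : 1 <= k%:R :> R. Proof. by rewrite ler1n. Qed.

Lemma xl_lt_b : xl < b.
Proof.
have hT := hT1.
have n1 := nr1.
have C0 : 0 <= 2 * nr ^+ 2 * (nr + 1) by rewrite !mulr_ge0 ?exprn_ge0 //; lra.
have CT : 2 * nr ^+ 2 * (nr + 1) <= T%:R.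
  have : 2 * nr ^+ 2 * (nr + 1) <= 2 * (nr + 1) ^+ 3.
    have -> : (nr + 1) ^+ 3 = nr ^+ 2 * (nr + 1) + (2 * nr ^+ 2 + 3 * nr + 1) by ring.
    have := sqr_ge0 nr; lra.
  lra.
exact: (claimB lam_pos lam_half k1 (hpos (x := HU) isT) (hpos (x := HV) isT)
   (hpos (x := HPV i0) isT) (hpos (x := HY2) isT) (hpos (x := HY3) isT) (hpos (x := HY4 ord0) isT)
   (ler0n _ T) C0 EVr (E_PV i0) (E_Y4 ord0) EY3r EY2r (E_Y1 ord0) hB CT).
Qed.

Lemma xl_lt_y4 : xl < f (HY4 ord0).
Proof.
have n0 : 0 <= nr by [].
exact: (claimA lam_pos lam_half k1 (hpos (x := HU) isT) (hpos (x := HV) isT)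
   (hpos (x := HPV i0) isT) (hpos (x := HY2) isT) (hpos (x := HY3) isT) (hpos (x := HY4 ord0) isT)
   (ler0n _ T) n0 ht0 EVr (E_PV i0) (E_Y4 ord0) EY3r EY2r (E_Y1 ord0) xl_lt_b (hA xl_lt_b) hTk hT3).
Qed.

Lemma g_incr j : (0 < j <= l.+1)%N -> g ord0 j.-1 < g ord0 j.
Proof.
move=> /andP[j0 jn].
have gp : forall j, (0 < j < l.+1)%N -> 0 <= g ord0 j by move=> j1 _; exact: ltW (g_pos _ _).
have dn : 0 < g ord0 l.+1 - g ord0 (l.+1).-1 by rewrite gn -pred_Sn; have := xl_lt_b; lra.
have := pth_mono (ltW lam_pos) (g_rec ord0) gp dn (m := (l.+1 - j)%N) ltac:(lia).
have -> : (l.+1 - (l.+1 - j))%N = j by lia.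
lra.
Qed.

Variable p : V -> V.
Hypothesis hp : spectral_parent (@hadj l k T) (HPU i0) f p.

Lemma fX m r : (m < l)%N -> f (HX (inord m) r) = g ord0 m.+1.
Proof. move=> ml; rewrite -(g_sym r (j := m.+1)) /=; [by rewrite ifT | lia]. Qed.

Lemma fXi (i : 'I_l) r : f (HX i r) = g ord0 (val i).+1.
Proof. by rewrite -(fX r (ltn_ord i)) inord_val. Qed.

Lemma p_v1 : p (HPV i0) = HV.
Proof.
have [ad _] := hp (x := HPV i0) isT.
by move: ad; case: (p (HPV i0)).
Qed.

Lemma p_HU : p HU = HPU i0.
Proof.
have [_ mn] := hp (x := HU) isT.
have := mn (HPU i0) isT; rewrite hf0.
case: (eqVneq (p HU) (HPU i0)) => [//|ne] h.
by have := lt_le_trans (hpos ne) h; rewrite ltxx.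
Qed.

Lemma p_HV : exists r, p HV = HX ord_max r.
Proof.
have [ad mn] := hp (x := HV) isT.
have m0 := mn (HX ord_max ord0) ltac:(by rewrite /hadj /= eqxx).
rewrite g_l in m0.
move: ad m0; case: (p HV) => //.
- move=> i r /= /eqP E _; exists r; congr HX; exact: val_inj.
- move=> r _; rewrite Y4_eq; have := xl_lt_y4; lra.
- move=> j _; rewrite PV_eq; have := xl_lt_b; have := E_PV i0; have := lam_pos.
  have := hpos (x := HPV i0) isT => Q0 l0 e xb.
  have := mulr_gt0 l0 Q0; lra.
Qed.

Lemma p_HX (i : 'I_l) r : p (HX i r) = if val i == 0%N then HU else HX (inord (val i).-1) r.
Proof.
case: i => j il /=.
have [ad mn] := hp (x := HX (Ordinal il) r) isT.
have gi : g ord0 j < g ord0 j.+2.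
  have h1 : g ord0 j < g ord0 j.+1 by apply: (g_incr (j := j.+1)); apply/andP; split=> //; apply: ltnW.
  have h2 : g ord0 j.+1 < g ord0 j.+2 by apply: (g_incr (j := j.+2)).
  by apply: lt_trans h1 h2.
have flow : f (if j == 0%N then HU else HX (inord j.-1) r) = g ord0 j.
  case: (eqVneq j 0%N) => [->//|j0].
  rewrite fX; last lia.
  by congr g; lia.
have adl : hadj (HX (Ordinal il) r) (if j == 0%N then HU else (HX (inord j.-1) r : V)).
  case: (eqVneq j 0%N) => [E|j0]; rewrite /hadj /=.
    by rewrite E.
  rewrite eqxx /= inordK; last lia.
  by apply/orP; right; apply/eqP; lia.
have hlow := mn _ adl.
rewrite flow in hlow.
move: ad hlow; rewrite /hadj.
case: (p (HX (Ordinal il) r)) => [| |i1 r1|r1|r1| | |j1|j1] //=.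
- by move=> /eqP ->.
- rewrite orbF => /eqP jl.
  have e : g ord0 j.+2 = b by rewrite jl /= ltnn.
  rewrite -e => h; exfalso; clear adl flow; lra.
- move=> /orP[/andP[/eqP <- /eqP e1]|/andP[/eqP -> /eqP e2]].
    rewrite fXi; change (\val i1) with (nat_of_ord i1); rewrite e1 => h; exfalso; clear adl flow; lra.
  have -> : (j == 0%N) = false by apply/eqP; lia.
  move=> _; congr HX; apply: val_inj; rewrite /= inordK; lia.
Qed.

Lemma iter_HX m : forall (i : 'I_l) r, val i = m ->
  iter m.+1 p (HX i r) = HU /\ (forall m', (m' <= m)%N -> iter m' p (HX i r) != HPU i0).
Proof.
elim: m => [|m IH] i r im.
  split; first by rewrite /= p_HX im.
  by case.
have ml : (m < l)%N.
  have h := ltn_ord i.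
  have h2 : (\val i < l)%N := h.
  by rewrite im in h2; exact: ltnW.
have pe : p (HX i r) = HX (inord m) r by rewrite p_HX im.
have [IH1 IH2] := IH (inord m) r (inordK ml).
split; first by rewrite iterSr pe.
case=> [|m'] // hm.
by rewrite iterSr pe; apply: IH2.
Qed.

Lemma main_path : spectral_path_length (HPU i0) p (HPV i0) (l + 3).
Proof.
have [r pr] := p_HV.
have [I1 I2] := iter_HX (i := ord_max) r erefl.
have e3 : (l + 3 = l'.+1.+1.+2)%N by lia.
split.
  rewrite e3 iterS iterSr p_v1 iterSr pr.
  by rewrite I1 p_HU.
move=> m; rewrite e3 => hm.
case: m hm => [|[|m]] hm //.
  by rewrite /= p_v1.
rewrite !iterSr p_v1 pr.
have [hm2|hm2] := leqP m l'.
  by apply: I2.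
have -> : m = l'.+1 by lia.
by rewrite I1.
Qed.

End Main.

Section Dist.
Variables (l' k' T : nat) (i0 : 'I_T).
Local Notation l := l'.+1.
Local Notation k := k'.+1.
Local Notation V := (hvert l k T).
Hypothesis hl : (4 <= l')%N.
Hypothesis hi0 : val i0 = 0%N.

Definition rho (x : V) : nat :=
  match x with
  | HU => 1 | HV => 6 | HX i _ => minn (val i + 2) 6
  | HY1 _ => 2 | HY2 => 3 | HY3 => 4 | HY4 _ => 5
  | HPU j => if val j == 0%N then 0 else 2
  | HPV _ => 7
  end%N.

Lemma rho_lip x y : hadj x y -> (rho x <= rho y + 1)%N.
Proof.
rewrite /hadj; case: x => [| |i r|r|r| | |j|j]; case: y => [| |i1 r1|r1|r1| | |j1|j1] //=;
  rewrite ?orbF; try (case: ifP => //=); try (case: ifP => //=); try lia;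
  move=> /orP[/andP[_ /eqP]|/andP[_ /eqP]]; lia.
Qed.

Lemma rho_path x q : path (@hadj l k T) x q -> (rho x <= rho (last x q) + size q)%N.
Proof.
elim: q x => [|y q IH] x /=; first by rewrite addn0.
move=> /andP[a pq]; have := rho_lip a; have := IH _ pq; lia.
Qed.

Lemma gdist7 : gdist (@hadj l k T) (HPV i0) (HPU i0) 7.
Proof.
split.
  by exists [:: HV; HY4 ord0; HY3; HY2; HY1 ord0; HU; HPU i0].
move=> q pq lq; have := rho_path pq; rewrite lq /= hi0 /=; lia.
Qed.
End Dist.

Theorem theorem19 (R : realType) (l : nat) (t : R) :
  (6 < l)%N -> 0 < t ->
  exists K : nat, forall k : nat, (2 < k)%N -> (K <= k)%N ->
    (0 < Tof t k)%N /\
    forall i0 : 'I_(Tof t k), val i0 = 0%N ->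
      let u1 : hvert l k (Tof t k) := HPU i0 in
      let v1 : hvert l k (Tof t k) := HPV i0 in
      gdist (@hadj l k (Tof t k)) v1 u1 7 /\
      forall (f : hvert l k (Tof t k) -> R) (p : hvert l k (Tof t k) -> hvert l k (Tof t k)),
        is_fs (@hadj l k (Tof t k)) u1 f ->
        spectral_parent (@hadj l k (Tof t k)) u1 f p ->
        spectral_path_length u1 p v1 (l + 3).
Proof.
case: l => [//|l'] hl ht.
set nr : R := (l'.+2)%:R.
have n0 : 0 <= nr by [].
set C : R := 2 * (nr + 1) ^+ 3 + 1 + (nr + 2 * nr * t + 2 * nr ^+ 2) + 1.
have C2 : 2 <= C.
  have : 0 <= (nr + 1) ^+ 3 by rewrite exprn_ge0 //; lra.
  have : 0 <= nr * t by rewrite mulr_ge0 //; lra.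
  have := sqr_ge0 nr; rewrite /C; lra.
exists (Num.truncn (C / t)).+1 => k hk hK.
have hk0 : 0 <= t * k%:R by rewrite mulr_ge0 //; lra.
have TleR : (Tof t k)%:R <= t * k%:R by rewrite /Tof truncn_le.
have TgtR : t * k%:R < (Tof t k)%:R + 1 by rewrite /Tof natr1; exact: truncnS_gt.
have kC : C < t * k%:R.
  have h1 : C / t < (Num.truncn (C / t)).+1%:R by exact: truncnS_gt.
  have h2 : (Num.truncn (C / t)).+1%:R <= k%:R :> R by rewrite ler_nat.
  have : C / t * t < k%:R * t by rewrite ltr_pM2r //; lra.
  by rewrite divfK ?gt_eqF // mulrC.
have TC : C - 1 < (Tof t k)%:R by lra.
have T0 : (0 < Tof t k)%N by rewrite -(ltr0n R); lra.
split => // i0 hi0; cbv zeta.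
case: k hk hK hk0 TleR TgtR kC TC T0 i0 hi0 => [//|k'] hk hK hk0 TleR TgtR kC TC T0 i0 hi0.
split; first by apply: gdist7 => //; lia.
move=> f p [[lam [[hf0 [_ heig]] _]] hpos] hp.
have hT1 : 2 * (nr + 1) ^+ 3 + 1 <= (Tof t k'.+1)%:R.
  have : 0 <= nr + 2 * nr * t + 2 * nr ^+ 2.
    have : 0 <= nr * t by rewrite mulr_ge0 //; lra.
    have := sqr_ge0 nr; lra.
  move: TC; rewrite /C; lra.
have hT3 : nr + 2 * nr * t + 2 * nr ^+ 2 <= (Tof t k'.+1)%:R.
  have : 0 <= (nr + 1) ^+ 3 by rewrite exprn_ge0 //; lra.
  move: TC; rewrite /C; lra.
exact: (main_path hf0 hpos heig hT1 ht TleR hT3 hp).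
Qed.
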